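(* Let $1<w\le 2$, $h>1$, $k\ge 2$, and let $\frac12\le y_1<\dots<y_n\le h-\frac12$ be uniformly spaced with $y_{i+1}-y_i=\frac1k$ for all $i$. Let $(\mathbf x,\prec)$ be a $\frac1k$-reasonable layout of this instance, and let $W=[a,b]\subseteq[\frac12,h-\frac12]$ and $W'=[a-\frac1k,b+\frac1k]$. Then the number of bad squares $s_i$ with $y_i\in W$ is at most three times the number of standard bad squares $s_i$ with $y_i\in W'$.
   Context: The instance is the strip $T=[0,w]\times[0,h]$ with the given $y_i$. A layout is a pair $(\mathbf x,\prec)$ where $\mathbf x=(x_1,\dots,x_n)$ with $x_i\in[\frac12,w-\frac12]$, and $\prec$ is a total order on the squares $s_1,\dots,s_n$, where $s_i$ is the closed axis-parallel unit square with centre $(x_i,y_i)$. If $s_i\prec s_j$ we say $s_j$ is in front of $s_i$ and $s_i$ is behind $s_j$. A point $p$ on the boundary of $s_i$ is visible if every square $s_j$ ($j\neq i$) containing $p$ is behind $s_i$, and covered otherwise. The visible perimeter of $s_i$ is the total length of its visible boundary points; the gap of $s_i$ is its visible perimeter minus $2$, the gap of a layout is the minimum gap of its squares, and a layout is $\varepsilon$-reasonable if its gap is larger than $\varepsilon$. A bad square is a square with at least two of its four corners covered; a standard bad square is a bad square one of whose vertical sides is entirely covered. *)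

(* Defs.v *)
From HB Require Import structures.
From mathcomp Require Import all_boot all_order all_algebra perm.
From mathcomp Require Import all_classical all_reals.
From mathcomp Require Import ereal measure lebesgue_measure.
Set Implicit Arguments. Unset Strict Implicit. Unset Printing Implicit Defensive.
Import Order.TTheory GRing.Theory Num.Theory.
Local Open Scope ring_scope.
Local Open Scope classical_set_scope.

Section Layouts.
Variables (R : realType) (n : nat).

(* A layout: centres (x i, y i) of the closed axis-parallel unit squares s_i,
   and a total order on the squares given by a ranking permutation:
   s_i ≺ s_j  iff  ord i < ord j. *)

Definition in_square (x y : 'I_n -> R) (j : 'I_n) (p : R * R) : Prop :=
  `|p.1 - x j| <= 1/2 /\ `|p.2 - y j| <= 1/2.

Definition visible (x y : 'I_n -> R) (ord : {perm 'I_n}) (i : 'I_n)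
    (p : R * R) : Prop :=
  forall j : 'I_n, j != i -> in_square x y j p -> (ord j < ord i)%N.

Definition covered (x y : 'I_n -> R) (ord : {perm 'I_n}) (i : 'I_n)
    (p : R * R) : Prop := ~ visible x y ord i p.

Definition visible_part (x y : 'I_n -> R) (ord : {perm 'I_n}) (i : 'I_n)
    (c : R) (side : R -> R * R) : set R :=
  [set t : R | c - 1/2 <= t <= c + 1/2 /\ visible x y ord i (side t)].

Definition visible_perimeter (x y : 'I_n -> R) (ord : {perm 'I_n})
    (i : 'I_n) : \bar R :=
  (lebesgue_measure (visible_part x y ord i (x i) (fun t => (t, y i - 1/2)%R))
 + lebesgue_measure (visible_part x y ord i (x i) (fun t => (t, y i + 1/2)%R))
 + lebesgue_measure (visible_part x y ord i (y i) (fun t => (x i - 1/2, t)%R))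
 + lebesgue_measure (visible_part x y ord i (y i) (fun t => (x i + 1/2, t)%R)))%E.

Definition gap (x y : 'I_n -> R) (ord : {perm 'I_n}) (i : 'I_n) : \bar R :=
  (visible_perimeter x y ord i - 2%:E)%E.

(* layout gap = min of square gaps; eps-reasonable iff it is > eps,
   i.e. every square has gap > eps (finitely many squares) *)
Definition reasonable (eps : R) (x y : 'I_n -> R) (ord : {perm 'I_n}) : Prop :=
  forall i : 'I_n, (eps%:E < gap x y ord i)%E.

Definition covered_corners (x y : 'I_n -> R) (ord : {perm 'I_n}) (i : 'I_n)
    : nat :=
  (`[< covered x y ord i (x i - 1/2, y i - 1/2) >] : nat)
  + (`[< covered x y ord i (x i + 1/2, y i - 1/2) >] : nat)
  + (`[< covered x y ord i (x i - 1/2, y i + 1/2) >] : nat)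
  + (`[< covered x y ord i (x i + 1/2, y i + 1/2) >] : nat).

Definition bad (x y : 'I_n -> R) (ord : {perm 'I_n}) (i : 'I_n) : Prop :=
  (2 <= covered_corners x y ord i)%N.

Definition standard_bad (x y : 'I_n -> R) (ord : {perm 'I_n}) (i : 'I_n)
    : Prop :=
  bad x y ord i /\
  ((forall t, y i - 1/2 <= t <= y i + 1/2 ->
       covered x y ord i (x i - 1/2, t)) \/
   (forall t, y i - 1/2 <= t <= y i + 1/2 ->
       covered x y ord i (x i + 1/2, t))).

End Layouts.

(* Main.v *)
Require Import Defs.
From HB Require Import structures.
From mathcomp Require Import all_boot all_order all_algebra perm.
From mathcomp Require Import all_classical all_reals.
From mathcomp Require Import ereal measure lebesgue_measure lebesgue_stieltjes_measure measure_extension.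
From mathcomp Require Import lra.
Import Order.TTheory GRing.Theory Num.Theory.
Local Open Scope ring_scope.
Local Open Scope classical_set_scope.

Lemma meas_le (R : realType) (A : set R) (u v : R) : u <= v -> A `<=` `[u, v] ->
  (lebesgue_measure A <= (v - u)%:E)%E.
Proof.
move=> uv sA.
apply: (@le_trans _ _ (lebesgue_measure (`[u, v] : set R))).
  rewrite /lebesgue_measure /lebesgue_stieltjes_measure /measure_extension.
  exact: le_mu_ext.
rewrite lebesgue_measure_itv /=.
case: ifP => _; first by [].
by rewrite lee_fin subr_ge0.
Qed.

Section Geo.
Variables (R : realType) (n : nat) (x y : 'I_n -> R) (ord : {perm 'I_n}) (e : R).
Hypothesis e_pos : 0 < e.
Hypothesis e_small : 2 * e <= 1.
Hypothesis Hx : forall i j, x i - x j <= 1.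
Hypothesis Hmono : forall i j : 'I_n, (i < j)%N -> y i < y j.
Hypothesis Hstep : forall i j : 'I_n, nat_of_ord j = (nat_of_ord i).+1 -> y j - y i = e.
Hypothesis Hreas : reasonable e x y ord.

Ltac nrmH := match goal with
 | H : is_true (@Order.le ?d ?I ?a ?b) |- _ =>
    lazymatch I with reals_Real__to__Order_Preorder _ => fail | _ =>
      change (is_true (@Order.le ring_display (reals_Real__to__Order_Preorder R) a b)) in H end
 | H : is_true (@Order.lt ?d ?I ?a ?b) |- _ =>
    lazymatch I with reals_Real__to__Order_Preorder _ => fail | _ =>
      change (is_true (@Order.lt ring_display (reals_Real__to__Order_Preorder R) a b)) in H end
 | H : @eq ?T ?a ?b |- _ =>
    lazymatch T with R => fail | _ => change (@eq R a b) in H end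
 end.
Ltac nrmG := match goal with
 | |- is_true (@Order.le ?d ?I ?a ?b) =>
    lazymatch I with reals_Real__to__Order_Preorder _ => fail | _ =>
      change (is_true (@Order.le ring_display (reals_Real__to__Order_Preorder R) a b)) end
 | |- is_true (@Order.lt ?d ?I ?a ?b) =>
    lazymatch I with reals_Real__to__Order_Preorder _ => fail | _ =>
      change (is_true (@Order.lt ring_display (reals_Real__to__Order_Preorder R) a b)) end
 end.
Ltac lra' := repeat nrmH; try nrmG; lra.

Lemma in_sqE j p : in_square x y j p <->
  [/\ x j - 1/2 <= p.1, p.1 <= x j + 1/2, y j - 1/2 <= p.2 & p.2 <= y j + 1/2].
Proof.
rewrite /in_square !ler_norml; split.
  by case=> /andP[a b] /andP[c d]; split; lra.
by case=> a b c d; split; apply/andP; split; lra.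
Qed.

Lemma in_sqI j (a b : R) : x j - 1/2 <= a -> a <= x j + 1/2 -> y j - 1/2 <= b -> b <= y j + 1/2 ->
  in_square x y j (a, b).
Proof. by move=> *; apply/in_sqE; split. Qed.

Lemma lecase (a b : R) : a <= b \/ b < a.
Proof. by case: (lerP a b); [left|right]. Qed.

Lemma coveredP i p : covered x y ord i p <-> exists j, in_square x y j p /\ (ord i < ord j)%N.
Proof.
split.
- move=> H; apply: contrapT => Hn; apply: H => j ji Hj.
  rewrite ltnNge; apply/negP => le; apply: Hn; exists j; split => //.
  rewrite ltn_neqAle le andbT.
  by rewrite eq_sym; apply/negP => /eqP /val_inj /perm_inj /eqP; rewrite (negbTE ji).
- case=> j [Hj lt] Hv.
  have ji : j != i by apply: contraTneq lt => ->; rewrite ltnn.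
  have := Hv j ji Hj; rewrite ltnNge => /negP; apply; exact: ltnW.
Qed.

Definition cov_out i (c : R) (side : R -> R * R) (u v : R) := forall t : R, c - 1/2 <= t -> t <= c + 1/2 ->
  (t < u \/ v < t) -> exists j, in_square x y j (side t) /\ (ord i < ord j)%N.

Lemma side_le i (c : R) side (u v : R) : u <= v -> cov_out i c side u v ->
  (lebesgue_measure (visible_part x y ord i c side) <= (v - u)%:E)%E.
Proof.
move=> uv H; apply: meas_le => // t [/andP[t1 t2] vis].
rewrite /= in_itv /=; apply/andP; split; rewrite leNgt; apply/negP => lt.
  have [j [Hj o]] := H t t1 t2 (or_introl lt).
  by have : covered x y ord i (side t) by apply/coveredP; exists j.
have [j [Hj o]] := H t t1 t2 (or_intror lt).
by have : covered x y ord i (side t) by apply/coveredP; exists j.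
Qed.

Lemma cov_triv i (c : R) side : cov_out i c side (c - 1/2) (c + 1/2).
Proof. by move=> t t1 t2 [] ?; exfalso; lra. Qed.

Lemma perim_contra i (u1 v1 u2 v2 u3 v3 u4 v4 : R) :
 u1 <= v1 -> u2 <= v2 -> u3 <= v3 -> u4 <= v4 ->
 cov_out i (x i) (fun t => (t, y i - 1/2)) u1 v1 ->
 cov_out i (x i) (fun t => (t, y i + 1/2)) u2 v2 ->
 cov_out i (y i) (fun t => (x i - 1/2, t)) u3 v3 ->
 cov_out i (y i) (fun t => (x i + 1/2, t)) u4 v4 ->
 (v1 - u1) + (v2 - u2) + (v3 - u3) + (v4 - u4) <= 2 + e -> False.
Proof.
move=> l1 l2 l3 l4 c1 c2 c3 c4 S.
have := Hreas i; rewrite /gap /visible_perimeter.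
have m1 := side_le _ _ _ _ _ l1 c1; have m2 := side_le _ _ _ _ _ l2 c2.
have m3 := side_le _ _ _ _ _ l3 c3; have m4 := side_le _ _ _ _ _ l4 c4.
have := leeB (leeD (leeD (leeD m1 m2) m3) m4) (lexx (2%:E : \bar R)).
move=> H1 H2; move: H1; rewrite -!EFinD => H1.
have := lt_le_trans H2 H1; rewrite lte_fin; lra.
Qed.


Lemma left_SB i : (forall t : R, y i - 1/2 <= t -> t <= y i + 1/2 ->
   exists j, in_square x y j (x i - 1/2, t) /\ (ord i < ord j)%N) -> standard_bad x y ord i.
Proof.
move=> H.
have cv t : y i - 1/2 <= t -> t <= y i + 1/2 -> covered x y ord i (x i - 1/2, t).
  by move=> t1 t2; apply/coveredP; apply: H.
split; last by left => t /andP[t1 t2]; apply: cv.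
rewrite /bad /covered_corners.
have -> : `[< covered x y ord i (x i - 1 / 2, y i - 1 / 2) >] = true by apply: asboolT; apply: cv; lra.
have -> : `[< covered x y ord i (x i - 1 / 2, y i + 1 / 2) >] = true by apply: asboolT; apply: cv; lra.
by case: (`[< _ >]); case: (`[< _ >]).
Qed.

Lemma right_SB i : (forall t : R, y i - 1/2 <= t -> t <= y i + 1/2 ->
   exists j, in_square x y j (x i + 1/2, t) /\ (ord i < ord j)%N) -> standard_bad x y ord i.
Proof.
move=> H.
have cv t : y i - 1/2 <= t -> t <= y i + 1/2 -> covered x y ord i (x i + 1/2, t).
  by move=> t1 t2; apply/coveredP; apply: H.
split; last by right => t /andP[t1 t2]; apply: cv.
rewrite /bad /covered_corners.
have -> : `[< covered x y ord i (x i + 1 / 2, y i - 1 / 2) >] = true by apply: asboolT; apply: cv; lra.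
have -> : `[< covered x y ord i (x i + 1 / 2, y i + 1 / 2) >] = true by apply: asboolT; apply: cv; lra.
by case: (`[< _ >]); case: (`[< _ >]).
Qed.


Lemma y_le (a b : 'I_n) : (a <= b)%N -> y a <= y b.
Proof.
rewrite leq_eqVlt => /orP[/eqP E|lt]; last exact/ltW/Hmono.
by rewrite (val_inj E).
Qed.

Lemma y_below (i p l : 'I_n) : (val p).+1 = val i -> l != i -> y l <= y i -> y l <= y p.
Proof.
move=> pi li yli; apply: y_le.
have : (val l < val i)%N.
  rewrite ltn_neqAle; apply/andP; split; first by apply: contra li => /eqP/val_inj ->.
  rewrite leqNgt; apply/negP => /Hmono; lra.
by rewrite -pi.
Qed.

Lemma y_above (i q l : 'I_n) : val q = (val i).+1 -> l != i -> y i <= y l -> y q <= y l.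
Proof.
move=> qi li yli; apply: y_le.
have : (val i < val l)%N.
  rewrite ltn_neqAle; apply/andP; split; first by apply: contra li => /eqP/val_inj ->.
  rewrite leqNgt; apply/negP => /Hmono; lra.
by rewrite qi.
Qed.

Lemma front_neq (i l : 'I_n) : (ord i < ord l)%N -> l != i.
Proof. by move=> lt; apply: contraTneq lt => ->; rewrite ltnn. Qed.

Ltac wit j := exists j; split; [apply: in_sqI; lra' | by []].
Ltac cov j1 j2 := move=> ? ? ? [] ?; [ first [ by exfalso; lra' | wit j1 | wit j2 ]
                                     | first [ by exfalso; lra' | wit j1 | wit j2 ] ].
Ltac cvL j := move=> ? ? ? [] ?; [wit j | exfalso; lra'].
Ltac cvR j := move=> ? ? ? [] ?; [exfalso; lra' | wit j].
Ltac fs j1 j2 c := move=> ? ? ?;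
  match goal with |- exists _, in_square _ _ _ (_, ?t) /\ _ => case: (lecase c t) => ? end;
  [wit j1 | wit j2].
Ltac fullside j1 j2 c := move=> ? ? ?;
  match goal with |- exists _, in_square _ _ _ (_, ?t) /\ _ => case: (lecase c t) => ? end;
  first [ wit j1 | wit j2 ].

Lemma claimBL (i p l : 'I_n) : (val p).+1 = val i -> (ord p < ord i)%N -> (ord i < ord l)%N ->
  in_square x y l (x i - 1/2, y i - 1/2) -> standard_bad x y ord p.
Proof.
have ep := e_pos; have es := e_small.
move=> pi opi oil /in_sqE [/= a b c d].
have li := front_neq _ _ oil.
have ylp : y l <= y p by apply: (y_below _ _ _ pi li); lra'.
have yip : y i - y p = e by apply: Hstep.
have opl : (ord p < ord l)%N by apply: ltn_trans oil.
have := Hx p i; have := Hx i p; have := Hx p l; have := Hx l p; have := Hx i l; have := Hx l i.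
move=> *.
case: (lecase (x i) (x p)) => ?.
  by apply: left_SB; fs i l (y i - 1/2).
case: (lecase (x l) (x p)) => ?; last first.
  by apply: right_SB; fs i l (y i - 1/2).
exfalso; apply: (perim_contra p (x l + 1/2) (x p + 1/2) (x p - 1/2) (x i - 1/2)
   (y l + 1/2) (y p + 1/2) (y p - 1/2) (y i - 1/2)); [lra'|lra'|lra'|lra'|cvL l|cvR i|cvL l|cvR i|lra'].

Qed.


Lemma claimBR (i p l : 'I_n) : (val p).+1 = val i -> (ord p < ord i)%N -> (ord i < ord l)%N ->
  in_square x y l (x i + 1/2, y i - 1/2) -> standard_bad x y ord p.
Proof.
have ep := e_pos; have es := e_small.
move=> pi opi oil /in_sqE [/= a b c d].
have li := front_neq _ _ oil.
have ylp : y l <= y p by apply: (y_below _ _ _ pi li); lra'.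
have yip : y i - y p = e by apply: Hstep.
have opl : (ord p < ord l)%N by apply: ltn_trans oil.
have := Hx p i; have := Hx i p; have := Hx p l; have := Hx l p; have := Hx i l; have := Hx l i.
move=> *.
case: (lecase (x p) (x i)) => ?.
  by apply: right_SB; fs i l (y i - 1/2).
case: (lecase (x p) (x l)) => ?; last first.
  by apply: left_SB; fs i l (y i - 1/2).
exfalso; apply: (perim_contra p (x p - 1/2) (x l - 1/2) (x i + 1/2) (x p + 1/2)
   (y p - 1/2) (y i - 1/2) (y l + 1/2) (y p + 1/2)); [lra'|lra'|lra'|lra'|cvR l|cvL i|cvR i|cvL l|lra'].

Qed.

Lemma claimTL (i q l : 'I_n) : val q = (val i).+1 -> (ord q < ord i)%N -> (ord i < ord l)%N ->
  in_square x y l (x i - 1/2, y i + 1/2) -> standard_bad x y ord q.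
Proof.
have ep := e_pos; have es := e_small.
move=> qi oqi oil /in_sqE [/= a b c d].
have li := front_neq _ _ oil.
have ylq : y q <= y l by apply: (y_above _ _ _ qi li); lra'.
have yqi : y q - y i = e by apply: Hstep.
have oql : (ord q < ord l)%N by apply: ltn_trans oil.
have := Hx q i; have := Hx i q; have := Hx q l; have := Hx l q; have := Hx i l; have := Hx l i.
move=> *.
case: (lecase (x i) (x q)) => ?.
  by apply: left_SB; fs l i (y i + 1/2).
case: (lecase (x l) (x q)) => ?; last first.
  by apply: right_SB; fs l i (y i + 1/2).
exfalso; apply: (perim_contra q (x q - 1/2) (x i - 1/2) (x l + 1/2) (x q + 1/2)
   (y q - 1/2) (y l - 1/2) (y i + 1/2) (y q + 1/2)); [lra'|lra'|lra'|lra'|cvR i|cvL l|cvR l|cvL i|lra'].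

Qed.

Lemma claimTR (i q l : 'I_n) : val q = (val i).+1 -> (ord q < ord i)%N -> (ord i < ord l)%N ->
  in_square x y l (x i + 1/2, y i + 1/2) -> standard_bad x y ord q.
Proof.
have ep := e_pos; have es := e_small.
move=> qi oqi oil /in_sqE [/= a b c d].
have li := front_neq _ _ oil.
have ylq : y q <= y l by apply: (y_above _ _ _ qi li); lra'.
have yqi : y q - y i = e by apply: Hstep.
have oql : (ord q < ord l)%N by apply: ltn_trans oil.
have := Hx q i; have := Hx i q; have := Hx q l; have := Hx l q; have := Hx i l; have := Hx l i.
move=> *.
case: (lecase (x q) (x i)) => ?.
  by apply: right_SB; fs l i (y i + 1/2).
case: (lecase (x q) (x l)) => ?; last first.
  by apply: left_SB; fs l i (y i + 1/2).
exfalso; apply: (perim_contra q (x i + 1/2) (x q + 1/2) (x q - 1/2) (x l - 1/2)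
   (y i + 1/2) (y q + 1/2) (y q - 1/2) (y l - 1/2)); [lra'|lra'|lra'|lra'|cvL i|cvR l|cvL i|cvR l|lra'].

Qed.


Lemma next_exists (i l : 'I_n) : l != i -> y i <= y l -> exists q : 'I_n, val q = (val i).+1.
Proof.
move=> li yil.
have lt : (val i < val l)%N.
  rewrite ltn_neqAle; apply/andP; split; first by apply: contra li => /eqP/val_inj ->.
  rewrite leqNgt; apply/negP => /Hmono; lra'.
by exists (Ordinal (leq_ltn_trans lt (ltn_ord l))).
Qed.

Lemma prev_exists (i l : 'I_n) : l != i -> y l <= y i -> exists p : 'I_n, (val p).+1 = val i.
Proof.
move=> li yli.
have lt : (val l < val i)%N.
  rewrite ltn_neqAle; apply/andP; split; first by apply: contra li => /eqP/val_inj ->.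
  rewrite leqNgt; apply/negP => /Hmono; lra'.
have lt2 : ((val i).-1 < n)%N by apply: leq_ltn_trans (leq_pred _) (ltn_ord i).
exists (Ordinal lt2) => /=; by rewrite prednK //; apply: leq_ltn_trans lt.
Qed.

Lemma ord_cmp (a b : 'I_n) : a != b -> (ord a < ord b)%N \/ (ord b < ord a)%N.
Proof.
move=> ab; case: (ltngtP (ord a) (ord b)) => E; [by left|by right|].
by move/val_inj/perm_inj: E => E; rewrite E eqxx in ab.
Qed.

Lemma top_case i : covered x y ord i (x i - 1/2, y i + 1/2) \/ covered x y ord i (x i + 1/2, y i + 1/2) ->
  exists q : 'I_n, val q = (val i).+1 /\ (standard_bad x y ord q \/ (ord i < ord q)%N).
Proof.
have ep := e_pos; have es := e_small.
move=> H.
have [l [oil Hl]] : exists l, (ord i < ord l)%N /\ (in_square x y l (x i - 1/2, y i + 1/2) \/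
    in_square x y l (x i + 1/2, y i + 1/2)).
  by case: H => /coveredP [l [Hl o]]; exists l; split; [|left| |right].
have li := front_neq _ _ oil.
have yil : y i <= y l by case: Hl => /in_sqE [/= a b c d]; lra'.
have [q qi] := next_exists i l li yil.
exists q; split => //.
have qni : q != i by apply/eqP => E; move: qi; rewrite E => /n_Sn.
case: (ord_cmp q i qni) => o; last by right.
by left; case: Hl => Hl; [exact: (claimTL i q l qi o oil Hl) | exact: (claimTR i q l qi o oil Hl)].
Qed.

Lemma bot_case i : covered x y ord i (x i - 1/2, y i - 1/2) \/ covered x y ord i (x i + 1/2, y i - 1/2) ->
  exists p : 'I_n, (val p).+1 = val i /\ (standard_bad x y ord p \/ (ord i < ord p)%N).
Proof.
have ep := e_pos; have es := e_small.
move=> H.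
have [l [oil Hl]] : exists l, (ord i < ord l)%N /\ (in_square x y l (x i - 1/2, y i - 1/2) \/
    in_square x y l (x i + 1/2, y i - 1/2)).
  by case: H => /coveredP [l [Hl o]]; exists l; split; [|left| |right].
have li := front_neq _ _ oil.
have yli : y l <= y i by case: Hl => /in_sqE [/= a b c d]; lra'.
have [p pi] := prev_exists i l li yli.
exists p; split => //.
have pni : p != i by apply/eqP => E; move: pi; rewrite E => /esym /n_Sn.
case: (ord_cmp p i pni) => o; last by right.
by left; case: Hl => Hl; [exact: (claimBL i p l pi o oil Hl) | exact: (claimBR i p l pi o oil Hl)].
Qed.

Lemma bad_cases i : bad x y ord i ->
  (covered x y ord i (x i - 1/2, y i + 1/2) /\ covered x y ord i (x i + 1/2, y i + 1/2)) \/
  (covered x y ord i (x i - 1/2, y i - 1/2) /\ covered x y ord i (x i + 1/2, y i - 1/2)) \/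
  ((covered x y ord i (x i - 1/2, y i + 1/2) \/ covered x y ord i (x i + 1/2, y i + 1/2)) /\
   (covered x y ord i (x i - 1/2, y i - 1/2) \/ covered x y ord i (x i + 1/2, y i - 1/2))).
Proof.
rewrite /bad /covered_corners.
case: (asboolP (covered x y ord i (x i - 1/2, y i - 1/2))) => h1;
case: (asboolP (covered x y ord i (x i + 1/2, y i - 1/2))) => h2;
case: (asboolP (covered x y ord i (x i - 1/2, y i + 1/2))) => h3;
case: (asboolP (covered x y ord i (x i + 1/2, y i + 1/2))) => h4 //= _; tauto.
Qed.

Ltac cov2 j1 j2 := move=> ? ? ? [] ?; [wit j1 | wit j2].

Lemma bad_near i : bad x y ord i -> exists b : 'I_n, standard_bad x y ord b /\
   (val b = val i \/ (val b).+1 = val i \/ val b = (val i).+1).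
Proof.
have ep := e_pos; have es := e_small.
move=> /bad_cases [[hTL hTR] | [[hBL hBR] | [hT hB]]].
- have [q [qi [SBq | oiq]]] := top_case i (or_introl hTL).
    by exists q; split => //; right; right.
  exfalso.
  have yqi : y q - y i = e by apply: Hstep.
  move/coveredP: hTL => [l1 [H1 o1]]; move/coveredP: hTR => [l2 [H2 o2]].
  move/in_sqE: H1 => [/= a1 b1 c1 d1]; move/in_sqE: H2 => [/= a2 b2 c2 d2].
  have := Hx l2 l1; have := Hx i q; have := Hx q i; move=> *.
  case: (lecase (x q) (x i)) => ?.
    apply: (perim_contra i (x i - 1/2) (x i + 1/2) (x l1 + 1/2) (x l1 + 1/2)
       (y i - 1/2) (y q - 1/2) (y i - 1/2) (y i + 1/2));
    [lra'|lra'|lra'|lra'| apply: cov_triv | cov2 l1 l2 | cvR q | apply: cov_triv | lra'].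
  apply: (perim_contra i (x i - 1/2) (x i + 1/2) (x l1 + 1/2) (x l1 + 1/2)
     (y i - 1/2) (y i + 1/2) (y i - 1/2) (y q - 1/2));
  [lra'|lra'|lra'|lra'| apply: cov_triv | cov2 l1 l2 | apply: cov_triv | cvR q | lra'].
- have [p [pi [SBp | oip]]] := bot_case i (or_introl hBL).
    by exists p; split => //; right; left.
  exfalso.
  have yip : y i - y p = e by apply: Hstep.
  move/coveredP: hBL => [l1 [H1 o1]]; move/coveredP: hBR => [l2 [H2 o2]].
  move/in_sqE: H1 => [/= a1 b1 c1 d1]; move/in_sqE: H2 => [/= a2 b2 c2 d2].
  have := Hx l2 l1; have := Hx i p; have := Hx p i; move=> *.
  case: (lecase (x p) (x i)) => ?.
    apply: (perim_contra i (x l1 + 1/2) (x l1 + 1/2) (x i - 1/2) (x i + 1/2)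
       (y p + 1/2) (y i + 1/2) (y i - 1/2) (y i + 1/2));
    [lra'|lra'|lra'|lra'| cov2 l1 l2 | apply: cov_triv | cvL p | apply: cov_triv | lra'].
  apply: (perim_contra i (x l1 + 1/2) (x l1 + 1/2) (x i - 1/2) (x i + 1/2)
     (y i - 1/2) (y i + 1/2) (y p + 1/2) (y i + 1/2));
  [lra'|lra'|lra'|lra'| cov2 l1 l2 | apply: cov_triv | apply: cov_triv | cvL p | lra'].
- have [q [qi [SBq | oiq]]] := top_case i hT.
    by exists q; split => //; right; right.
  have [p [pi [SBp | oip]]] := bot_case i hB.
    by exists p; split => //; right; left.
  have yqi : y q - y i = e by apply: Hstep.
  have yip : y i - y p = e by apply: Hstep.
  have := Hx p q; have := Hx q p; have := Hx i q; have := Hx q i; have := Hx i p; have := Hx p i.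
  move=> *.
  case: (lecase (x q) (x i)) => ?; case: (lecase (x p) (x i)) => ?.
  + by exists i; split; [apply: left_SB; fs q p (y q - 1/2) | left].
  + exfalso; apply: (perim_contra i (x i - 1/2) (x p - 1/2) (x q + 1/2) (x i + 1/2)
       (y i - 1/2) (y q - 1/2) (y p + 1/2) (y i + 1/2));
    [lra'|lra'|lra'|lra'| cvR p | cvL q | cvR q | cvL p | lra'].
  + exfalso; apply: (perim_contra i (x p + 1/2) (x i + 1/2) (x i - 1/2) (x q - 1/2)
       (y p + 1/2) (y i + 1/2) (y i - 1/2) (y q - 1/2));
    [lra'|lra'|lra'|lra'| cvL p | cvR q | cvL p | cvR q | lra'].
  + by exists i; split; [apply: right_SB; fs q p (y q - 1/2) | left].
Qed.

End Geo.

Local Close Scope classical_set_scope.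

Theorem corollary13 (R : realType) (w h : R) (k n : nat)
  (y : 'I_n -> R) (x : 'I_n -> R) (ord : {perm 'I_n}) (a b : R) :
  1 < w -> w <= 2 -> 1 < h -> (2 <= k)%N ->
  (forall i : 'I_n, 1/2 <= y i <= h - 1/2) ->
  (forall i j : 'I_n, (i < j)%N -> y i < y j) ->
  (forall i j : 'I_n, nat_of_ord j = (nat_of_ord i).+1 ->
      y j - y i = 1 / k%:R) ->
  (forall i : 'I_n, 1/2 <= x i <= w - 1/2) ->
  reasonable (1 / k%:R) x y ord ->
  1/2 <= a -> a <= b -> b <= h - 1/2 ->
  (#|[set i : 'I_n | `[< bad x y ord i >] && (a <= y i <= b)%R]|
   <= 3 * #|[set i : 'I_n | `[< standard_bad x y ord i >] &&
                  (a - 1 / k%:R <= y i <= b + 1 / k%:R)%R]|)%N.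
Proof.
move=> w1 w2 h1 k2 Hyb Hmono Hstep Hxb Hreas a1 ab b2.
set e := 1 / k%:R in Hstep Hreas *.
have kpos : (2 : R) <= k%:R by rewrite (ler_nat R 2 k).

have k0 : (0 : R) < k%:R by apply: lt_le_trans kpos.
have e_pos : 0 < e by rewrite /e divr_gt0.
have e_small : 2 * e <= 1 by rewrite /e mul1r ler_pdivrMr // mul1r.
have Hx : forall i j, x i - x j <= 1.
  move=> i j; have /andP[p1 p2] := Hxb i; have /andP[q1 q2] := Hxb j; lra.
have near : forall i, bad x y ord i -> exists j : 'I_n, standard_bad x y ord j /\
   (val j = val i \/ (val j).+1 = val i \/ val j = (val i).+1).
  by move=> i; apply: (@bad_near R n x y ord e).
pose nb (j i : 'I_n) := [|| val j == val i, (val j).+1 == val i | val j == (val i).+1].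
pose P (j : 'I_n) := `[< standard_bad x y ord j >] && (a - e <= y j <= b + e).
have yclose (i j : 'I_n) : nb j i -> y i - e <= y j <= y i + e.
  case/or3P => /eqP E.
  - by rewrite (val_inj E); apply/andP; split; lra.
  - have := Hstep j i (esym E); move=> H; apply/andP; split; lra.
  - have := Hstep i j E; move=> H; apply/andP; split; lra.
have key i : `[< bad x y ord i >] && (a <= y i <= b) -> exists j, P j && nb j i.
  case/andP => /asboolP /near [j [SBj Hj]] /andP[ya yb].
  have Hnb : nb j i by apply/or3P; case: Hj => [->|[->|->]]; [constructor 1|constructor 2|constructor 3].
  exists j; rewrite Hnb andbT /P (asboolT SBj) /=.
  by have /andP[c1 c2] := yclose i j Hnb; apply/andP; split; lra.
pose g i := odflt i [pick j | P j && nb j i].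
have gP i : `[< bad x y ord i >] && (a <= y i <= b) -> P (g i) && nb (g i) i.
  move=> H; rewrite /g; case: pickP => [j //|none].
  by have [j Hj] := key i H; rewrite none in Hj.
have card3 j : (#|[pred i : 'I_n | nb j i]| <= 3)%N.
  rewrite cardE -(size_map val).
  apply: (leq_trans (uniq_leq_size (s2 := [:: val j; (val j).+1; (val j).-1]) _ _)) => //.
    by rewrite map_inj_uniq ?enum_uniq //; exact: val_inj.
  move=> v /mapP [i]; rewrite mem_enum => /or3P [] /eqP E ->; rewrite !inE.
  - by rewrite E eqxx.
  - by rewrite -E eqxx orbT.
  - by rewrite E /= eqxx !orbT.
rewrite -sum1_card (partition_big g (fun j => j \in [set j | P j])); last first.
  by move=> i; rewrite !inE => /gP /andP[].
rewrite -[X in (_ <= 3 * X)%N]sum1_card big_distrr /=.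
apply: leq_sum => j _; rewrite muln1.
apply: (@leq_trans (\sum_(i | nb j i) 1)); last by rewrite sum1_card; exact: card3.
rewrite [X in (X <= _)%N]big_mkcond [X in (_ <= X)%N]big_mkcond /=.
apply: leq_sum => i _; case: ifP => // /andP[]; rewrite inE => Hi /eqP <-.
by have /andP[_ ->] := gP i Hi.
Qed.
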